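(* Let $A$ be a real symmetric matrix of tropical rank two. Then the symmetric tropical rank of $A$ is greater than two if and only if some principal $3\times 3$ submatrix of $A$ is not symmetrically tropically singular.
   Context: For an $r\times r$ submatrix of a real matrix $A$ with row index set $I$ and column index set $J$, each bijection $\rho:I\to J$ has value $\sum_{i\in I}A_{i,\rho(i)}$; the submatrix is tropically singular if the minimum value is attained by at least two distinct bijections. For symmetric $A$, the submatrix is symmetrically tropically singular if the minimum is attained by at least two distinct monomials $\prod_{i\in I}X_{i,\rho(i)}$, where variables are subject to the identification $X_{i,j}=X_{j,i}$. The tropical rank (resp. symmetric tropical rank) of $A$ is the largest $r$ such that $A$ has an $r\times r$ submatrix (arbitrary row and column sets) that is not tropically singular (resp. not symmetrically tropically singular). A principal submatrix is one with equal row and column index sets. *)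

(* Defs.v *)
From HB Require Import structures.
From mathcomp Require Import all_boot all_order all_algebra all_fingroup.
Set Implicit Arguments. Unset Strict Implicit. Unset Printing Implicit Defensive.
Import Order.TTheory GRing.Theory Num.Theory.
Local Open Scope ring_scope.

Section Trop.
Variables (R : realFieldType) (n : nat) (A : 'M[R]_n).

(* An r x r submatrix is given by injective row/column enumerations
   f g : 'I_r -> 'I_n.  Bijections rho : I -> J correspond exactly to
   permutations s : 'S_r via rho (f i) = g (s i). *)
Definition bij_val r (f g : 'I_r -> 'I_n) (s : 'S_r) : R :=
  \sum_(i < r) A (f i) (g (s i)).

Definition bij_is_min r (f g : 'I_r -> 'I_n) (s : 'S_r) : bool :=
  [forall s' : 'S_r, bij_val f g s <= bij_val f g s'].

Definition trop_singular r (f g : 'I_r -> 'I_n) : bool :=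
  [exists s1 : 'S_r, exists s2 : 'S_r,
     [&& s1 != s2, bij_is_min f g s1 & bij_is_min f g s2]].

(* unordered pair {a,b} encoded as (min, max) *)
Definition upair (a b : 'I_n) : 'I_n * 'I_n :=
  if (a <= b)%N then (a, b) else (b, a).

(* the monomial prod_i X_{f i, g (s i)} with X_{a,b} = X_{b,a}:
   exponent of each unordered variable *)
Definition bij_monomial r (f g : 'I_r -> 'I_n) (s : 'S_r)
  : {ffun 'I_n * 'I_n -> nat} :=
  [ffun p => #|[set i : 'I_r | upair (f i) (g (s i)) == p]|].

Definition sym_trop_singular r (f g : 'I_r -> 'I_n) : bool :=
  [exists s1 : 'S_r, exists s2 : 'S_r,
     [&& bij_monomial f g s1 != bij_monomial f g s2,
         bij_is_min f g s1 & bij_is_min f g s2]].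

Definition has_nonsingular r : bool :=
  [exists f : {ffun 'I_r -> 'I_n}, exists g : {ffun 'I_r -> 'I_n},
     [&& injectiveb f, injectiveb g & ~~ trop_singular f g]].

Definition has_sym_nonsingular r : bool :=
  [exists f : {ffun 'I_r -> 'I_n}, exists g : {ffun 'I_r -> 'I_n},
     [&& injectiveb f, injectiveb g & ~~ sym_trop_singular f g]].

Definition trop_rank : nat := \max_(r < n.+1 | has_nonsingular r) r.
Definition sym_trop_rank : nat := \max_(r < n.+1 | has_sym_nonsingular r) r.

End Trop.

(* Main.v *)
Require Import Defs.
From HB Require Import structures.
From mathcomp Require Import all_boot all_order all_algebra all_fingroup.
Import Order.TTheory GRing.Theory Num.Theory.
Local Open Scope ring_scope.

Section Helpers.
Variables (R : realFieldType) (n : nat) (A : 'M[R]_n).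

Lemma exists_min r (f g : 'I_r -> 'I_n) : exists s, bij_is_min A f g s.
Proof.
case: (arg_minP (bij_val A f g) (i0 := 1%g) (P := predT) isT) => y _ H.
by exists y; apply/forallP => z; apply: H.
Qed.

Lemma upairP (a b c d : 'I_n) : upair a b = upair c d ->
  (a = c /\ b = d) \/ (a = d /\ b = c).
Proof. by rewrite /upair; case: ifP => _; case: ifP => _ [-> ->]; auto. Qed.

Lemma mono_match r (f g : 'I_r -> 'I_n) (s t : 'S_r) i :
  injective f -> injective g -> bij_monomial f g s = bij_monomial f g t ->
  s i != t i -> exists i', f i' = g (s i) /\ g (t i') = f i.
Proof.
move=> fi gi /ffunP /(_ (upair (f i) (g (s i)))); rewrite !ffunE => e ne.
have : (0 < #|[set j | upair (f j) (g (t j)) == upair (f i) (g (s i))]|)%N.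
  by rewrite -e; apply/card_gt0P; exists i; rewrite inE.
case/card_gt0P => i'; rewrite inE => /eqP /upairP [[/fi ei' /eqP]|[e1 e2]].
  by rewrite ei' (inj_eq gi) eq_sym (negbTE ne).
by exists i'.
Qed.

Lemma three_cover (x y z j : 'I_3) : x != y -> x != z -> y != z ->
  j \in [:: x; y; z].
Proof.
case: x => [[|[|[|?]]] ?] //; case: y => [[|[|[|?]]] ?] //;
case: z => [[|[|[|?]]] ?] //; case: j => [[|[|[|?]]] ?] //.
Qed.

Lemma codom_sub (f g : 'I_3 -> 'I_n) (s1 s2 : 'S_3) :
  injective f -> injective g -> s1 != s2 ->
  bij_monomial f g s1 = bij_monomial f g s2 ->
  forall j, g j \in codom f.
Proof.
move=> fi gi ns e j.
have [i ne] : exists i, s1 i != s2 i.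
  apply/existsP; apply: contraR ns; rewrite negb_exists => /forallP h.
  by apply/eqP/permP => x; apply/eqP; move: (h x); rewrite negbK.
have [i1 [e11 e12]] := @mono_match _ _ _ _ _ i fi gi e ne.
have [i2 [e21 e22]] := @mono_match _ _ _ _ _ i fi gi (esym e) (contra_neq esym ne).
have nab : s2 i1 != s1 i.
  apply/negP => /eqP h; move: e12; rewrite h -e11 => /fi ei.
  by move: ne; rewrite -h ei eqxx.
have nac : s2 i1 != s2 i.
  apply/negP => /eqP /perm_inj ei; move: e11 e12 ne; rewrite ei => ->.
  by move=> /gi ->; rewrite eqxx.
have := @three_cover _ _ _ j nab nac ne.
rewrite !inE => /or3P [] /eqP ->.
- by rewrite e12 codom_f.
- by rewrite -e11 codom_f.
- by rewrite -e21 codom_f.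
Qed.

Lemma reorder_val r (f g g' : 'I_r -> 'I_n) (P : 'S_r) :
  (forall j, g j = g' (P j)) -> forall t,
  bij_val A f g t = bij_val A f g' (t * P) /\
  bij_monomial f g t = bij_monomial f g' (t * P).
Proof.
move=> h t; split.
  by apply: eq_bigr => i _; rewrite permM h.
apply/ffunP => p; rewrite !ffunE; apply: eq_card => i.
by rewrite !inE permM h.
Qed.

Lemma final3 (f g : 'I_3 -> 'I_n) : injective f -> injective g ->
  trop_singular A f g ->
  (forall s1 s2, bij_is_min A f g s1 -> bij_is_min A f g s2 ->
     bij_monomial f g s1 = bij_monomial f g s2) ->
  ~~ sym_trop_singular A f f.
Proof.
move=> fi gi /existsP [s1 /existsP [s2 /and3P [ns m1 m2]]] hm.
have H := @codom_sub _ _ _ _ fi gi ns (hm _ _ m1 m2).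
pose pi j := iinv (H j).
have epi j : f (pi j) = g j by rewrite f_iinv.
have pinj : injective pi by move=> x y exy; apply: gi; rewrite -!epi exy.
pose P := perm pinj.
have hg j : g j = f (P j) by rewrite permE epi.
have rv := @reorder_val _ f _ _ _ hg.
apply/negP => /existsP [u1 /existsP [u2 /and3P [nm mu1 mu2]]].
have eK u : (u * P^-1 * P = u)%g by rewrite -mulgA mulVg mulg1.
have mt u : bij_is_min A f f u -> bij_is_min A f g (u * P^-1)%g.
  move=> /forallP mu; apply/forallP => t'.
  by rewrite !(proj1 (rv _)) eK mu.
move: (hm _ _ (mt _ mu1) (mt _ mu2)).
by rewrite !(proj2 (rv _)) !eK; apply/eqP.
Qed.

Section Ext.
Variables (m : nat).

Definition hsum (s : 'S_3) (u : 'I_3 + 'I_m) : 'I_3 + 'I_m :=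
  match u with inl j => inl (s j) | inr k => inr k end.

Lemma hsum_inj s : injective (hsum s).
Proof.
by case=> [a|a] [b|b] //= [e]; rewrite ?(perm_inj e) ?e.
Qed.

Definition ext_fun (s : 'S_3) (i : 'I_(3 + m)) : 'I_(3 + m) :=
  unsplit (hsum s (split i)).

Lemma ext_inj s : injective (ext_fun s).
Proof.
apply: inj_comp; first exact: (can_inj unsplitK).
apply: inj_comp; [exact: hsum_inj | exact: (can_inj splitK)].
Qed.

Definition ext s : 'S_(3 + m) := perm (ext_inj s).

Lemma ext_l s j : ext s (lshift m j) = lshift m (s j).
Proof.
have e : split (lshift m j) = inl j := unsplitK (inl j).
by rewrite permE /ext_fun e.
Qed.

Lemma ext_r s k : ext s (rshift 3 k) = rshift 3 k.
Proof.
have e : split (rshift 3 k) = inr k := unsplitK (inr k).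
by rewrite permE /ext_fun e.
Qed.

Lemma card_split (P : pred 'I_(3 + m)) :
  #|[set i | P i]| = (#|[set j : 'I_3 | P (lshift m j)]| +
                      #|[set k : 'I_m | P (rshift 3 k)]|)%N.
Proof.
rewrite -!sum1_card big_split_ord /=; congr (_ + _)%N; apply: eq_bigl => i;
by rewrite !inE.
Qed.

Variables (f g : 'I_(3 + m) -> 'I_n) (rho : 'S_(3 + m)).

Definition f3 : {ffun 'I_3 -> 'I_n} := [ffun j => f (lshift m j)].
Definition g3 : {ffun 'I_3 -> 'I_n} := [ffun j => g (rho (lshift m j))].

Lemma val_split t : bij_val A f g t =
  \sum_(j < 3) A (f (lshift m j)) (g (t (lshift m j))) +
  \sum_(k < m) A (f (rshift 3 k)) (g (t (rshift 3 k))).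
Proof. by rewrite /bij_val big_split_ord. Qed.

Lemma val_ext s : bij_val A f g (ext s * rho) =
  bij_val A f3 g3 s + 
  \sum_(k < m) A (f (rshift 3 k)) (g (rho (rshift 3 k))).
Proof.
rewrite val_split; congr (_ + _).
  by apply: eq_bigr => j _; rewrite permM ext_l !ffunE.
by apply: eq_bigr => j _; rewrite permM ext_r.
Qed.

Lemma val_rho : bij_val A f g rho =
  bij_val A f3 g3 1 + 
  \sum_(k < m) A (f (rshift 3 k)) (g (rho (rshift 3 k))).
Proof.
rewrite val_split; congr (_ + _).
by apply: eq_bigr => j _; rewrite perm1 !ffunE.
Qed.

Lemma mono_ext s p : bij_monomial f g (ext s * rho) p =
  (bij_monomial f3 g3 s p +
   #|[set k : 'I_m | upair (f (rshift 3 k)) (g (rho (rshift 3 k))) == p]|)%N.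
Proof.
rewrite !ffunE card_split; congr (_ + _)%N; apply: eq_card => x;
by rewrite !inE permM ?ext_l ?ext_r ?ffunE.
Qed.

Hypothesis rho_min : bij_is_min A f g rho.

Lemma ext_min s : bij_is_min A f3 g3 s -> bij_is_min A f g (ext s * rho).
Proof.
move=> /forallP ms; apply/forallP => t.
apply: le_trans (forallP rho_min t).
by rewrite val_ext val_rho lerD2r.
Qed.

Lemma mono_eq3 : ~~ sym_trop_singular A f g ->
  forall s1 s2, bij_is_min A f3 g3 s1 -> bij_is_min A f3 g3 s2 ->
     bij_monomial f3 g3 s1 = bij_monomial f3 g3 s2.
Proof.
move=> ns s1 s2 m1 m2.
have e : bij_monomial f g (ext s1 * rho) = bij_monomial f g (ext s2 * rho).
  apply/eqP; apply: contraNT ns => ne; apply/existsP; exists (ext s1 * rho)%g.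
  by apply/existsP; exists (ext s2 * rho)%g; rewrite ne !ext_min.
apply/ffunP => p; move/ffunP: e => /(_ p); rewrite !mono_ext.
by move/addIn.
Qed.
End Ext.

Lemma main_r m (f g : 'I_(3 + m) -> 'I_n) :
  injective f -> injective g -> ~~ sym_trop_singular A f g ->
  ~~ has_nonsingular A 3 ->
  exists f' : {ffun 'I_3 -> 'I_n},
     injectiveb f' && ~~ sym_trop_singular A f' f'.
Proof.
move=> fi gi ns nh.
have [rho mr] := exists_min _ f g.
have f3i : injective (f3 _ f).
  by move=> x y; rewrite !ffunE => /fi /lshift_inj.
have g3i : injective (g3 _ g rho).
  by move=> x y; rewrite !ffunE => /gi /perm_inj /lshift_inj.
have ts : trop_singular A (f3 _ f) (g3 _ g rho).
  apply: contraNT nh => h; apply/existsP; exists (f3 _ f); apply/existsP.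
  exists (g3 _ g rho). rewrite h andbT. apply/andP; split; apply/injectiveP; assumption.
exists (f3 _ f); apply/andP; split; first by apply/injectiveP.
apply: (@final3 _ _ f3i g3i ts).
exact: mono_eq3 mr ns.
Qed.
End Helpers.

Lemma le3n {n m} {f : {ffun 'I_m -> 'I_n}} :
  injectiveb f -> (m < n.+1)%N.
Proof. by move/injectiveP/leq_card; rewrite !card_ord. Qed.

Theorem proposition3 (R : realFieldType) (n : nat) (A : 'M[R]_n) :
  A^T = A -> trop_rank A = 2%N ->
  ((2 < sym_trop_rank A)%N <->
   exists f : {ffun 'I_3 -> 'I_n},
     injectiveb f && ~~ sym_trop_singular A f f).
Proof.
move=> _ tr; split.
- move=> H.
  have : ~~ [forall r : 'I_n.+1, has_sym_nonsingular A r ==> (r <= 2)%N].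
    apply: contraTN H => /forallP h; rewrite -leqNgt.
    by apply/bigmax_leqP => r Pr; exact: (implyP (h r) Pr).
  rewrite negb_forall => /existsP [[r /= _]].
  rewrite negb_imply -ltnNge => /andP [Pr lt2].
  have [m em] : exists m, r = (3 + m)%N by exists (r - 3)%N; rewrite subnKC.
  subst r.
  case/existsP: Pr => f /existsP [g /and3P [fi gi ns]].
  apply: (@main_r R n A m f g) => //; try exact/injectiveP.
  apply/negP => /existsP [f3 /existsP [g3 /and3P [f3i g3i hns]]].
  have h3 := le3n f3i.
  have : (3 <= trop_rank A)%N.
    apply: (@leq_bigmax_cond _ (fun r : 'I_n.+1 => has_nonsingular A r)
              (fun r => nat_of_ord r) (Ordinal h3)) => /=.
    apply/existsP; exists f3; apply/existsP; exists g3.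
    by rewrite f3i g3i hns.
  by rewrite tr.
- case=> f /andP [fi ns].
  have h3 := le3n fi.
  apply: (@leq_bigmax_cond _ (fun r : 'I_n.+1 => has_sym_nonsingular A r)
              (fun r => nat_of_ord r) (Ordinal h3)) => /=.
  by apply/existsP; exists f; apply/existsP; exists f; rewrite fi ns.
Qed.
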